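(* For all $n, k \in \mathbb{N}$, the quotient set $(\Sigma^{\mathrm{CoR}}_{n})_{\le k}/{\sim_{\mathrm{REL}}}$ is finite; i.e., up to semantic equivalence over all structures, there are only finitely many CoR terms in the level $\Sigma^{\mathrm{CoR}}_n$ of the dot-dagger alternation hierarchy having at most $k$ occurrences of variables.
   Context: Fix a non-empty finite set $V$ of variables. CoR terms are generated by $t ::= a \mid \bot \mid \top \mid t \cup t \mid t \cap t \mid t^{-} \mid \mathrm{I} \mid \mathrm{D} \mid t \cdot t \mid t \dagger t \mid t^{\pi}$, where $a \in V$ and $\pi$ ranges over all maps $\{1,2\}\to\{1,2\}$; $t^{\smile}$ abbreviates $t^{\pi}$ with $\pi = \{1\mapsto 2, 2\mapsto 1\}$. A structure $M$ consists of a non-empty set $|M|$ and a binary relation $a^M \subseteq |M|^2$ for each $a \in V$. The interpretation $[\![t]\!]_M \subseteq |M|^2$ is: $[\![a]\!]_M = a^M$, $[\![\bot]\!]_M=\emptyset$, $[\![\top]\!]_M = |M|^2$, $\cup,\cap$ set-theoretic, $[\![t^-]\!]_M = |M|^2\setminus[\![t]\!]_M$, $[\![\mathrm{I}]\!]_M=\{(x,y): x=y\}$, $[\![\mathrm{D}]\!]_M=\{(x,y): x\ne y\}$, $R\cdot S = \{(x,y) : \exists z,\ (x,z)\in R \wedge (z,y)\in S\}$, $R \dagger S = \{(x,y) : \forall z,\ (x,z)\in R \vee (z,y)\in S\}$, $R^{\pi} = \{(x_1,x_2) : (x_{\pi(1)}, x_{\pi(2)}) \in R\}$. $\mathrm{REL}$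 is the class of all structures. For a class $\mathcal{C}$ of structures, $t \sim_{\mathcal{C}} s$ iff $[\![t]\!]_M = [\![s]\!]_M$ for all $M \in \mathcal{C}$. For a term $t$, $\mathrm{vo}(t)$ is the number of occurrences of variables in $t$, and for a set $S$ of terms, $S_{\le k} = \{t \in S : \mathrm{vo}(t) \le k\}$. The dot-dagger alternation hierarchy: $\Sigma^{\mathrm{CoR}}_n, \Pi^{\mathrm{CoR}}_n$ ($n\in\mathbb{N}$) are the least sets such that $\Sigma^{\mathrm{CoR}}_0=\Pi^{\mathrm{CoR}}_0$ is the set of terms containing neither $\cdot$ nor $\dagger$; $\Sigma^{\mathrm{CoR}}_n\cup\Pi^{\mathrm{CoR}}_n \subseteq \Sigma^{\mathrm{CoR}}_{n+1}\cap\Pi^{\mathrm{CoR}}_{n+1}$; for $n\ge1$, if $s,u\in\Sigma^{\mathrm{CoR}}_n$ then $s\cup u, s\cap u, s\cdot u, s^{\pi}\in\Sigma^{\mathrm{CoR}}_n$ and $s\dagger u\in\Pi^{\mathrm{CoR}}_{n+1}$; for $n\ge1$, if $s,u\in\Pi^{\mathrm{CoR}}_n$ then $s\cup u,s\cap u,s\dagger u,s^{\pi}\in\Pi^{\mathrm{CoR}}_n$ and $s\cdot u\in\Sigma^{\mathrm{CoR}}_{n+1}$. *)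

(* Defs.v *)
From mathcomp Require Import all_boot.
Set Implicit Arguments. Unset Strict Implicit. Unset Printing Implicit Defensive.

(* CoR terms over a variable set V; pi ranges over all maps {1,2} -> {1,2},
   represented as finite functions 'I_2 -> 'I_2 (ord0 = 1, ord1 = 2). *)
Inductive term (V : Type) : Type :=
| tvar of V
| tbot
| ttop
| tcup of term V & term V
| tcap of term V & term V
| tcompl of term V
| tI
| tD
| tdot of term V & term V
| tdag of term V & term V
| tperm of {ffun 'I_2 -> 'I_2} & term V.

Arguments tbot {V}. Arguments ttop {V}. Arguments tI {V}. Arguments tD {V}.

Fixpoint vo V (t : term V) : nat :=
  match t with
  | tvar _ => 1
  | tbot | ttop | tI | tD => 0
  | tcup s u | tcap s u | tdot s u | tdag s u => vo s + vo u
  | tcompl s | tperm _ s => vo s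
  end.

Fixpoint sem V (T : Type) (ev : V -> T -> T -> Prop) (t : term V) : T -> T -> Prop :=
  match t with
  | tvar a => ev a
  | tbot => fun _ _ => False
  | ttop => fun _ _ => True
  | tcup s u => fun x y => sem ev s x y \/ sem ev u x y
  | tcap s u => fun x y => sem ev s x y /\ sem ev u x y
  | tcompl s => fun x y => ~ sem ev s x y
  | tI => fun x y => x = y
  | tD => fun x y => x <> y
  | tdot s u => fun x y => exists z, sem ev s x z /\ sem ev u z y
  | tdag s u => fun x y => forall z, sem ev s x z \/ sem ev u z y
  | tperm p s => fun x y =>
      let xs (i : 'I_2) := if nat_of_ord i == 0 then x else y in
      sem ev s (xs (p (@Ordinal 2 0 isT))) (xs (p (@Ordinal 2 1 isT)))
  end.

(* equivalence over REL: all structures (non-empty carrier) *)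
Definition rel_equiv V (t s : term V) : Prop :=
  forall (T : Type) (ev : V -> T -> T -> Prop), inhabited T ->
    forall x y : T, sem ev t x y <-> sem ev s x y.

Fixpoint dd_free V (t : term V) : bool :=
  match t with
  | tdot _ _ | tdag _ _ => false
  | tcup s u | tcap s u => dd_free s && dd_free u
  | tcompl s | tperm _ s => dd_free s
  | _ => true
  end.

Inductive Sigma V : nat -> term V -> Prop :=
| Sigma0 t : dd_free t -> Sigma 0 t
| SigmaS n t : Sigma n t -> Sigma n.+1 t
| SigmaP n t : Pi n t -> Sigma n.+1 t
| Sigma_cup n s u : Sigma n.+1 s -> Sigma n.+1 u -> Sigma n.+1 (tcup s u)
| Sigma_cap n s u : Sigma n.+1 s -> Sigma n.+1 u -> Sigma n.+1 (tcap s u)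
| Sigma_dot n s u : Sigma n.+1 s -> Sigma n.+1 u -> Sigma n.+1 (tdot s u)
| Sigma_perm n p s : Sigma n.+1 s -> Sigma n.+1 (tperm p s)
| Sigma_dotPi n s u : Pi n.+1 s -> Pi n.+1 u -> Sigma n.+2 (tdot s u)
with Pi V : nat -> term V -> Prop :=
| Pi0 t : dd_free t -> Pi 0 t
| PiS n t : Pi n t -> Pi n.+1 t
| PiSig n t : Sigma n t -> Pi n.+1 t
| Pi_cup n s u : Pi n.+1 s -> Pi n.+1 u -> Pi n.+1 (tcup s u)
| Pi_cap n s u : Pi n.+1 s -> Pi n.+1 u -> Pi n.+1 (tcap s u)
| Pi_dag n s u : Pi n.+1 s -> Pi n.+1 u -> Pi n.+1 (tdag s u)
| Pi_perm n p s : Pi n.+1 s -> Pi n.+1 (tperm p s)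
| Pi_dagSig n s u : Sigma n.+1 s -> Sigma n.+1 u -> Pi n.+2 (tdag s u).

(* Main.v *)
Require Import Defs.
From mathcomp Require Import all_boot.
From Stdlib Require List.
From Stdlib Require Import Classical ClassicalEpsilon.
Set Implicit Arguments. Unset Strict Implicit.

Definition asbool (P : Prop) : bool :=
  if excluded_middle_informative P then true else false.
Lemma asboolP (P : Prop) : asbool P <-> P.
Proof. rewrite /asbool; case: excluded_middle_informative => //. Qed.

Definition fin_classes (V : Type) (S : term V -> Prop) :=
  exists L : seq (term V),
    (forall s, List.In s L -> S s) /\
    (forall t, S t -> exists2 s, List.In s L & rel_equiv t s).

Lemma fin_of_inv (V : Type) (S : term V -> Prop) (Q : finType)
  (hold : Q -> forall T : Type, (V -> T -> T -> Prop) -> T -> T -> Prop) :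
  (forall t, S t -> forall T (ev : V -> T -> T -> Prop) x y T' (ev' : V -> T' -> T' -> Prop) x' y',
      (forall q, hold q T ev x y <-> hold q T' ev' x' y') -> sem ev t x y -> sem ev' t x' y') ->
  fin_classes S.
Proof.
move=> Hinv.
pose typ T (ev : V -> T -> T -> Prop) x y := [set q | asbool (hold q T ev x y)].
pose Prof t := [set s | asbool (exists T (ev : V -> T -> T -> Prop) x y, typ T ev x y = s /\ sem ev t x y)].
have key : forall t t', S t -> S t' -> Prof t = Prof t' -> rel_equiv t t'.
  have half : forall t t', S t' -> Prof t = Prof t' -> forall T (ev : V -> T -> T -> Prop) x y,
      sem ev t x y -> sem ev t' x y.
    move=> t t' St' EP T ev x y H.
    have : typ T ev x y \in Prof t by rewrite inE; apply/asboolP; exists T, ev, x, y.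
    rewrite EP inE => /asboolP [T0 [ev0 [x0 [y0 [E0 H0]]]]].
    apply: (Hinv _ St' _ _ _ _ _ _ _ _ _ H0) => q.
    have : (q \in typ T0 ev0 x0 y0) = (q \in typ T ev x y) by rewrite E0.
    rewrite !inE => Eb; split => Hh.
      by apply/asboolP; rewrite -Eb; apply/asboolP.
    by apply/asboolP; rewrite Eb; apply/asboolP.
  move=> t t' St St' EP T ev _ x y; split; first exact: half.
  exact: half.
have gen : forall ds : seq {set {set Q}}, exists L : seq (term V),
    (forall s, List.In s L -> S s) /\
    (forall t, S t -> Prof t \in ds -> exists2 s, List.In s L & Prof s = Prof t).
  elim=> [|d ds [L [HL1 HL2]]]; first by exists [::].
  case: (classic (exists s, S s /\ Prof s = d)) => [[s [Ss Es]]|Hn].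
  - exists (s :: L); split.
      by move=> s0 [<-|/HL1].
    move=> t St; rewrite inE => /orP [/eqP->|Ht]; first by exists s; [left|].
    by case: (HL2 t St Ht) => s1 H1 H2; exists s1; [right|].
  - exists L; split => // t St; rewrite inE => /orP [/eqP Et|Ht]; last exact: HL2.
    by case: Hn; exists t.
case: (gen (enum [set: {set {set Q}}])) => L [HL1 HL2].
exists L; split => // t St.
case: (HL2 t St); first by rewrite mem_enum inE.
move=> s Ls Es; exists s => //; apply: key => //.
exact: HL1.
Qed.


Definition at2 (T : Type) := exists a b : T, a <> b.
Definition at3 (T : Type) := exists a b c : T, [/\ a <> b, a <> c & b <> c].

Lemma ext0 (T T' : Type) (u v z : T) (u' v' : T') :
  (at2 T -> at2 T') -> (at3 T -> at3 T') -> (u = v <-> u' = v') ->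
  exists z', (u = z <-> u' = z') /\ (z = v <-> z' = v').
Proof.
move=> H2 H3 Huv.
case: (classic (z = u)) => [->|zu]; first by exists u'; split.
case: (classic (z = v)) => [->|zv]; first by exists v'; split => //; split => [/Huv|/Huv].
have [z' [z'u z'v]] : exists z', z' <> u' /\ z' <> v'.
  case: (classic (u = v)) => [Euv|Nuv].
  - have Eu' : u' = v' by apply/Huv.
    have [a [b ab]] : at2 T' by apply: H2; exists u, z => E; apply: zu.
    case: (classic (a = u')) => [au|au]; last by exists a; rewrite -Eu'.
    by exists b; rewrite -Eu'; split => E; apply: ab; rewrite au E.
  - have Nu' : u' <> v' by move=> /Huv.
    have [a [b [c [ab ac bc]]]] : at3 T' by apply: H3; exists u, v, z; split => // E; [apply: zu|apply: zv].
    case: (classic (a = u')) => [au|au]; case: (classic (a = v')) => [av|av].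
    + by case: Nu'; rewrite -au -av.
    + case: (classic (b = v')) => [bv|bv]; last by exists b; split => // E; apply: ab; rewrite au E.
      by exists c; split => E; [apply: ac; rewrite au E|apply: bc; rewrite bv E].
    + case: (classic (b = u')) => [bu|bu]; last by exists b; split => // E; apply: ab; rewrite av E.
      by exists c; split => E; [apply: bc; rewrite bu E|apply: ac; rewrite av E].
    + by exists a.
exists z'; split; split => E.
- by case: zu.
- by case: z'u.
- by case: zv.
- by case: z'v.
Qed.

Lemma eq_sym_iff (T T' : Type) (x y : T) (x' y' : T') :
  (x = y <-> x' = y') -> (y = x <-> y' = x').
Proof. by move=> E; split => H; apply/esym; apply/E; apply/esym. Qed.

Lemma const_inv (V : Type) T (ev : V -> T -> T -> Prop) T' (ev' : V -> T' -> T' -> Prop) :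
  (at2 T <-> at2 T') -> (at3 T <-> at3 T') -> forall (t : term V), vo t = 0 ->
  forall u v u' v', (u = v <-> u' = v') -> (sem ev t u v <-> sem ev' t u' v').
Proof.
move=> [H2 H2'] [H3 H3'] t.
elim: t => /=.
all: try (move=> *; discriminate).
- by move=> _ u v u' v'; split.
- by move=> _ u v u' v'; split.
- move=> s IHs u IHu /eqP; rewrite addn_eq0 => /andP [/eqP Es /eqP Eu] x y x' y' E.
  by rewrite (IHs Es x y x' y' E) (IHu Eu x y x' y' E).
- move=> s IHs u IHu /eqP; rewrite addn_eq0 => /andP [/eqP Es /eqP Eu] x y x' y' E.
  by rewrite (IHs Es x y x' y' E) (IHu Eu x y x' y' E).
- by move=> s IHs Es x y x' y' E; rewrite (IHs Es x y x' y' E).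
- by move=> _ u v u' v' E.
- by move=> _ u v u' v' E; split => H1 H4; apply: H1; apply/E.
- move=> s IHs u IHu /eqP; rewrite addn_eq0 => /andP [/eqP Es /eqP Eu] x y x' y' E.
  split.
  + move=> [z [h1 h2]]; have [z' [E1 E2]] := ext0 z H2 H3 E.
    by exists z'; split; [apply/(IHs Es _ _ _ _ E1)|apply/(IHu Eu _ _ _ _ E2)].
  + have E' : x' = y' <-> x = y by split => /E.
    move=> [z' [h1 h2]]; have [z [E1 E2]] := ext0 z' H2' H3' E'.
    have E1' : x = z <-> x' = z' by split => /E1.
    have E2' : z = y <-> z' = y' by split => /E2.
    by exists z; split; [apply/(IHs Es _ _ _ _ E1')|apply/(IHu Eu _ _ _ _ E2')].
- move=> s IHs u IHu /eqP; rewrite addn_eq0 => /andP [/eqP Es /eqP Eu] x y x' y' E.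
  split.
  + have E' : x' = y' <-> x = y by split => /E.
    move=> h z'; have [z [E1 E2]] := ext0 z' H2' H3' E'.
    have E1' : x = z <-> x' = z' by split => /E1.
    have E2' : z = y <-> z' = y' by split => /E2.
    by case: (h z) => hh; [left; apply/(IHs Es _ _ _ _ E1')|right; apply/(IHu Eu _ _ _ _ E2')].
  + move=> h z; have [z' [E1 E2]] := ext0 z H2 H3 E.
    by case: (h z') => hh; [left; apply/(IHs Es _ _ _ _ E1)|right; apply/(IHu Eu _ _ _ _ E2)].
- move=> p s IHs Es x y x' y' E.
  case: (nat_of_ord (p (@Ordinal 2 0 isT)) == 0); case: (nat_of_ord (p (@Ordinal 2 1 isT)) == 0);
    apply: IHs => //; exact: eq_sym_iff.
Qed.


Inductive ept (V : Type) :=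
| EAt of term V
| ECup of ept V & ept V
| ECap of ept V & ept V
| EDot of ept V & ept V
| EPerm of {ffun 'I_2 -> 'I_2} & ept V.

Fixpoint flat V (e : ept V) : term V :=
  match e with
  | EAt a => a
  | ECup e1 e2 => tcup (flat e1) (flat e2)
  | ECap e1 e2 => tcap (flat e1) (flat e2)
  | EDot e1 e2 => tdot (flat e1) (flat e2)
  | EPerm p e1 => tperm p (flat e1)
  end.

Fixpoint atoms V (e : ept V) : seq (term V) :=
  match e with
  | EAt a => [:: a]
  | ECup e1 e2 | ECap e1 e2 | EDot e1 e2 => atoms e1 ++ atoms e2
  | EPerm p e1 => atoms e1
  end.

Fixpoint semR V T (ev : V -> T -> T -> Prop) (E : T -> Prop) (e : ept V) : T -> T -> Prop :=
  match e with
  | EAt a => if vo a == 0 then sem ev a else fun u v => E u /\ E v /\ sem ev a u v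
  | ECup e1 e2 => fun x y => semR ev E e1 x y \/ semR ev E e2 x y
  | ECap e1 e2 => fun x y => semR ev E e1 x y /\ semR ev E e2 x y
  | EDot e1 e2 => fun x y => exists z, semR ev E e1 x z /\ semR ev E e2 z y
  | EPerm p e1 => fun x y =>
      let xs (i : 'I_2) := if nat_of_ord i == 0 then x else y in
      semR ev E e1 (xs (p (@Ordinal 2 0 isT))) (xs (p (@Ordinal 2 1 isT)))
  end.

Lemma atoms_vo V (e : ept V) a : List.In a (atoms e) -> vo a <= vo (flat e).
Proof.
elim: e => [b|e1 IH1 e2 IH2|e1 IH1 e2 IH2|e1 IH1 e2 IH2|p e1 IH1] /=.
- by case=> [->|[]].
all: try (move=> H; case: (List.in_app_or _ _ _ H) => [/IH1 h|/IH2 h]; [exact: leq_trans h (leq_addr _ _)|exact: leq_trans h (leq_addl _ _)]).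
exact: IH1.
Qed.

Lemma semR_mono V T (ev : V -> T -> T -> Prop) (E E' : T -> Prop) (e : ept V) :
  (forall z, E z -> E' z) -> forall u v, semR ev E e u v -> semR ev E' e u v.
Proof.
move=> HE; elim: e => [a|e1 IH1 e2 IH2|e1 IH1 e2 IH2|e1 IH1 e2 IH2|p e1 IH1] u v /=.
- by case: (vo a == 0) => // [[/HE h1 [/HE h2 h3]]].
- by case=> [/IH1|/IH2]; [left|right].
- by case=> /IH1 ? /IH2 ?.
- by case=> z [/IH1 ? /IH2 ?]; exists z.
- exact: IH1.
Qed.

Lemma extract V T (ev : V -> T -> T -> Prop) (e : ept V) u v :
  sem ev (flat e) u v -> exists E : seq T, size E <= (vo (flat e)).*2 /\ semR ev (fun z => List.In z E) e u v.
Proof.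
elim: e u v => [a|e1 IH1 e2 IH2|e1 IH1 e2 IH2|e1 IH1 e2 IH2|p e1 IH1] u v /=.
- move=> h; case: eqP => [_|Hn].
    by exists [::].
  exists [:: u; v]; split; last by split; [left|split; [right; left|]].
  by case: (vo a) Hn => // n _; rewrite doubleS.
- case=> [/IH1 [E [hs h]]|/IH2 [E [hs h]]]; exists E; split.
  + by rewrite doubleD; apply: leq_trans hs (leq_addr _ _).
  + by left.
  + by rewrite doubleD; apply: leq_trans hs (leq_addl _ _).
  + by right.
- case=> /IH1 [E1 [hs1 h1]] /IH2 [E2 [hs2 h2]]; exists (E1 ++ E2); split.
  + by rewrite size_cat doubleD leq_add.
  + split; [apply: semR_mono h1|apply: semR_mono h2] => z hz; apply: List.in_or_app; by [left|right].
- case=> z [/IH1 [E1 [hs1 h1]] /IH2 [E2 [hs2 h2]]]; exists (E1 ++ E2); split.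
  + by rewrite size_cat doubleD leq_add.
  + exists z; split; [apply: semR_mono h1|apply: semR_mono h2] => z0 hz; apply: List.in_or_app; by [left|right].
- by move/IH1.
Qed.


Definition img (I T : Type) (e : I -> T) (z : T) := exists i, z = e i.
Definition out1 (I T : Type) (e : I -> T) := exists a, ~ img e a.
Definition out2 (I T : Type) (e : I -> T) :=
  exists a b, [/\ ~ img e a, ~ img e b & a <> b].
Definition out3 (I T : Type) (e : I -> T) :=
  exists a b c, [/\ ~ img e a, ~ img e b, ~ img e c & [/\ a <> b, a <> c & b <> c]].
Definition G (I T T' : Type) (e : I -> T) (e' : I -> T') u u' :=
  (exists i, u = e i /\ u' = e' i) \/ (~ img e u /\ ~ img e' u').

Lemma G_img (I T T' : Type) (e : I -> T) (e' : I -> T') u u' :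
  G e e' u u' -> img e u -> exists i, u = e i /\ u' = e' i.
Proof. by case=> // [[h _]] /h. Qed.

Lemma G_nimg (I T T' : Type) (e : I -> T) (e' : I -> T') u u' :
  G e e' u u' -> ~ img e u -> ~ img e' u'.
Proof. by case=> [[i [-> _]] h|[]//]; case: h; exists i. Qed.

Lemma G_imgr (I T T' : Type) (e : I -> T) (e' : I -> T') u u' :
  G e e' u u' -> img e u -> img e' u'.
Proof. by move=> h1 h2; case: (G_img h1 h2) => i [_ ->]; exists i. Qed.

Lemma avoid2 (T : Type) (O : T -> Prop) (a b u : T) :
  O a -> O b -> a <> b -> exists w, O w /\ w <> u.
Proof.
move=> Oa Ob ab; case: (classic (a = u)) => [au|au]; last by exists a.
by exists b; split => // bu; apply: ab; rewrite au bu.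
Qed.

Lemma avoid3 (T : Type) (O : T -> Prop) (a b c u v : T) :
  O a -> O b -> O c -> [/\ a <> b, a <> c & b <> c] -> exists w, [/\ O w, w <> u & w <> v].
Proof.
move=> Oa Ob Oc [ab ac bc].
case: (classic (a = u)) => [au|au]; case: (classic (a = v)) => [av|av].
- case: (classic (b = u)) => [bu|bu]; first by case: ab; rewrite au bu.
  by exists b; split => // bv; apply: ab; rewrite av bv.
- case: (classic (b = v)) => [bv|bv]; last by exists b; split => // bu; apply: ab; rewrite au bu.
  by exists c; split => // E; [apply: ac; rewrite au E|apply: bc; rewrite bv E].
- case: (classic (b = u)) => [bu|bu]; last by exists b; split => // bv; apply: ab; rewrite av bv.
  by exists c; split => // E; [apply: bc; rewrite bu E|apply: ac; rewrite av E].
- by exists a.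
Qed.

Lemma ext1 (I T T' : Type) (e : I -> T) (e' : I -> T') :
  (forall i j, e i = e j <-> e' i = e' j) ->
  (out1 e -> out1 e') -> (out2 e -> out2 e') -> (out3 e -> out3 e') ->
  forall u v u' v', G e e' u u' -> G e e' v v' -> (u = v <-> u' = v') ->
  forall z, exists z', [/\ G e e' z z', (u = z <-> u' = z') & (z = v <-> z' = v')].
Proof.
move=> Heq H1 H2 H3 u v u' v' Gu Gv Euv z.
have same : forall w w' z z', G e e' w w' -> G e e' z z' -> img e z -> (w = z <-> w' = z').
  move=> w w' z0 z0' Gw Gz /(G_img Gz) [i [-> ->]].
  case: Gw => [[j [-> ->]]|[nw nw']]; first exact: Heq.
  by split => E; [case: nw; exists i|case: nw'; exists i].
case: (classic (img e z)) => [iz|nz].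
  case: (iz) => i Ez; have Gz : G e e' z (e' i) by left; exists i.
  by exists (e' i); split => //; [exact: same|apply: eq_sym_iff; exact: same].
case: (classic (z = u)) => [zu|zu].
  by subst z; exists u'; split => //; apply: eq_sym_iff.
case: (classic (z = v)) => [zv|zv].
  by subst z; exists v'.
have [w [Ow wu wv]] : exists w, [/\ ~ img e' w, w <> u' & w <> v'].
  case: (classic (img e u)) => [iu|nu]; case: (classic (img e v)) => [iv|nv].
  - have [a Oa] : out1 e' by apply: H1; exists z.
    exists a; split => // E; subst a; [case: Oa; exact: G_imgr Gu iu|case: Oa; exact: G_imgr Gv iv].
  - have [a [b [Oa Ob ab]]] : out2 e' by apply: H2; exists z, v; split => // E; case: zv.
    have [w [Ow wv]] := avoid2 (O := fun w => ~ img e' w) v' Oa Ob ab.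
    by exists w; split => // E; subst w; case: Ow; exact: G_imgr Gu iu.
  - have [a [b [Oa Ob ab]]] : out2 e' by apply: H2; exists z, u; split => // E; case: zu.
    have [w [Ow wu]] := avoid2 (O := fun w => ~ img e' w) u' Oa Ob ab.
    by exists w; split => // E; subst w; case: Ow; exact: G_imgr Gv iv.
  - case: (classic (u = v)) => [uv|uv].
      have [a [b [Oa Ob ab]]] : out2 e' by apply: H2; exists z, u; split => // E; case: zu.
      have [w [Ow wu]] := avoid2 (O := fun w => ~ img e' w) u' Oa Ob ab.
      by exists w; split => // E; apply: wu; rewrite E; apply/esym/Euv.
    have [a [b [c [Oa Ob Oc D3]]]] : out3 e'.
      by apply: H3; exists z, u, v; split => //; split => //.
    exact: (avoid3 (O := fun w => ~ img e' w) u' v' Oa Ob Oc D3).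
exists w; split.
- by right.
- by split => E; [case: zu|case: wu].
- by split => E; [case: zv|case: wv].
Qed.

Lemma G_eqpair (I T T' : Type) (e : I -> T) (e' : I -> T') (u v : T) (u' v' : T')
  (b1 b2 : bool) :
  G e e' u u' -> G e e' v v' -> (u = v <-> u' = v') ->
  let s := fun b : bool => if b then u else v in
  let s' := fun b : bool => if b then u' else v' in
  [/\ G e e' (s b1) (s' b1), G e e' (s b2) (s' b2) & (s b1 = s b2 <-> s' b1 = s' b2)].
Proof.
move=> Gu Gv E s s'; case: b1; case: b2; rewrite /s /s' /=; split => //.
exact: eq_sym_iff.
Qed.

Lemma ep_transport (V I T T' : Type) (ev : V -> T -> T -> Prop) (ev' : V -> T' -> T' -> Prop)
  (e : I -> T) (e' : I -> T') :
  (forall i j, e i = e j <-> e' i = e' j) ->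
  (at2 T <-> at2 T') -> (at3 T <-> at3 T') ->
  (out1 e -> out1 e') -> (out2 e -> out2 e') -> (out3 e -> out3 e') ->
  forall eps : ept V,
  (forall a, List.In a (atoms eps) -> forall i j, sem ev a (e i) (e j) <-> sem ev' a (e' i) (e' j)) ->
  forall u v u' v', semR ev (img e) eps u v -> G e e' u u' -> G e e' v v' -> (u = v <-> u' = v') ->
  sem ev' (flat eps) u' v'.
Proof.
move=> Heq H2 H3 H1o H2o H3o eps.
elim: eps => [a|e1 IH1 e2 IH2|e1 IH1 e2 IH2|e1 IH1 e2 IH2|p e1 IH1] Hat u v u' v' /=.
- case: eqP => [Ea|Ea].
    by move=> h _ _ E; apply/(const_inv ev ev' H2 H3 Ea E).
  move=> [iu [iv h]] Gu Gv _.
  case: (G_img Gu iu) => i [Eu ->]; case: (G_img Gv iv) => j [Ev ->].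
  by apply/(Hat a (or_introl erefl)); rewrite -Eu -Ev.
- have Hat1 : forall a, List.In a (atoms e1) -> forall i j, sem ev a (e i) (e j) <-> sem ev' a (e' i) (e' j).
    by move=> a Ha; apply: Hat; apply: List.in_or_app; left.
  have Hat2 : forall a, List.In a (atoms e2) -> forall i j, sem ev a (e i) (e j) <-> sem ev' a (e' i) (e' j).
    by move=> a Ha; apply: Hat; apply: List.in_or_app; right.
  by move=> [h|h] Gu Gv E; [left; exact: IH1 h Gu Gv E|right; exact: IH2 h Gu Gv E].
- have Hat1 : forall a, List.In a (atoms e1) -> forall i j, sem ev a (e i) (e j) <-> sem ev' a (e' i) (e' j).
    by move=> a Ha; apply: Hat; apply: List.in_or_app; left.
  have Hat2 : forall a, List.In a (atoms e2) -> forall i j, sem ev a (e i) (e j) <-> sem ev' a (e' i) (e' j).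
    by move=> a Ha; apply: Hat; apply: List.in_or_app; right.
  by move=> [h1 h2] Gu Gv E; split; [exact: IH1 h1 Gu Gv E|exact: IH2 h2 Gu Gv E].
- have Hat1 : forall a, List.In a (atoms e1) -> forall i j, sem ev a (e i) (e j) <-> sem ev' a (e' i) (e' j).
    by move=> a Ha; apply: Hat; apply: List.in_or_app; left.
  have Hat2 : forall a, List.In a (atoms e2) -> forall i j, sem ev a (e i) (e j) <-> sem ev' a (e' i) (e' j).
    by move=> a Ha; apply: Hat; apply: List.in_or_app; right.
  move=> [z [h1 h2]] Gu Gv E.
  have [z' [Gz E1 E2]] := ext1 Heq H1o H2o H3o Gu Gv E z.
  by exists z'; split; [exact: IH1 h1 Gu Gz E1|exact: IH2 h2 Gz Gv E2].
- move=> h Gu Gv E.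
  have := G_eqpair (nat_of_ord (p (@Ordinal 2 0 isT)) == 0) (nat_of_ord (p (@Ordinal 2 1 isT)) == 0) Gu Gv E.
  move=> /= [G1 G2 E12].
  exact: IH1 Hat _ _ _ _ h G1 G2 E12.
Qed.


Definition NN (k : nat) := (k.*2).+2.
Definition i0 k : 'I_(NN k) := ord0.
Definition i1 k : 'I_(NN k) := @Ordinal (NN k) 1 isT.

Definition QR (V : Type) (R : seq (term V)) (k : nat) : finType :=
  ({ffun 'I_(NN k) * 'I_(NN k) -> bool} * {ffun 'I_(size R) * 'I_(NN k) * 'I_(NN k) -> bool}
   * (bool * bool * bool * bool * bool))%type.

Definition flagsOK (I T : Type) (e : I -> T) (fl : bool * bool * bool * bool * bool) :=
  match fl with (f1, f2, f3, f4, f5) =>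
    [/\ at2 T <-> f1, at3 T <-> f2, out1 e <-> f3, out2 e <-> f4 & out3 e <-> f5] end.

Definition holdR (V : Type) (R : seq (term V)) (k : nat) (q : QR R k)
  (T : Type) (ev : V -> T -> T -> Prop) (x y : T) : Prop :=
  exists e : 'I_(NN k) -> T,
    [/\ e (i0 k) = x, e (i1 k) = y,
        forall i j, e i = e j <-> q.1.1 (i, j),
        forall (r : 'I_(size R)) i j, sem ev (nth tbot R r) (e i) (e j) <-> q.1.2 (r, i, j)
      & flagsOK e q.2].

Lemma In_nth (A : Type) (d z : A) (s : seq A) :
  List.In z s -> exists m, m < size s /\ nth d s m = z.
Proof.
elim: s => //= a s IH [->|/IH [m [hm hn]]]; first by exists 0.
by exists m.+1.
Qed.

Lemma ep_inv (V : Type) (A : term V -> Prop) k (R : seq (term V))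
  (HR : forall a, A a -> vo a <= k -> exists r, List.In r R /\ rel_equiv a r)
  (eps : ept V)
  (Hok : forall a, List.In a (atoms eps) -> A a \/ exists a0, A a0 /\ a = tcompl a0)
  (Hvo : vo (flat eps) <= k)
  T (ev : V -> T -> T -> Prop) (x y : T) T' (ev' : V -> T' -> T' -> Prop) (x' y' : T')
  (Hq : forall q : QR R k, @holdR V R k q T ev x y <-> @holdR V R k q T' ev' x' y') :
  sem ev (flat eps) x y -> sem ev' (flat eps) x' y'.
Proof.
move=> h; have [E [hs hE]] := extract h.
pose l := [:: x, y & E].
pose e (i : 'I_(NN k)) := nth x l i.
have inE : forall z, List.In z E -> img e z.
  move=> z /(In_nth x) [m [hm hn]].
  have hm2 : m.+2 < NN k.
    by rewrite /NN ltnS ltnS; apply: leq_trans hm (leq_trans hs _); rewrite leq_double.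
  by exists (Ordinal hm2); rewrite /e /= hn.
pose q : QR R k := ([ffun ij : 'I_(NN k) * 'I_(NN k) => asbool (e ij.1 = e ij.2)],
   [ffun rij : 'I_(size R) * 'I_(NN k) * 'I_(NN k) =>
      asbool (sem ev (nth tbot R rij.1.1) (e rij.1.2) (e rij.2))],
   (asbool (at2 T), asbool (at3 T), asbool (out1 e), asbool (out2 e), asbool (out3 e))).
have hq : @holdR V R k q T ev x y.
  exists e; split => //.
  - by move=> i j; rewrite /q /= ffunE /=; split => /asboolP.
  - by move=> r i j; rewrite /q /= ffunE /=; split => /asboolP.
  - by rewrite /q /=; split; split => /asboolP.
have [e' [e0 e1 Heq' Haf' Hfl']] := (Hq q).1 hq.
have Heq : forall i j, e i = e j <-> e' i = e' j.
  move=> i j; rewrite Heq' /q /= ffunE /=; split => /asboolP //.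
have [H2 H3 H1o H2o H3o] : [/\ at2 T <-> at2 T', at3 T <-> at3 T', out1 e -> out1 e',
    out2 e -> out2 e' & out3 e -> out3 e'].
  move: Hfl'; rewrite /q /= => [[F2 F3 F1o F2o F3o]].
  split.
  - by split => [/asboolP/F2|/F2/asboolP].
  - by split => [/asboolP/F3|/F3/asboolP].
  - by move=> /asboolP/F1o.
  - by move=> /asboolP/F2o.
  - by move=> /asboolP/F3o.
have Hat0 : forall a, A a -> vo a <= k -> forall i j, sem ev a (e i) (e j) <-> sem ev' a (e' i) (e' j).
  move=> a Aa va i j.
  have [r [Rr Ear]] := HR a Aa va.
  have [m [hm hn]] := In_nth tbot Rr.
  have E1 := Ear T ev (inhabits x) (e i) (e j).
  have E2 := Ear T' ev' (inhabits x') (e' i) (e' j).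
  have E3 := Haf' (Ordinal hm) i j.
  rewrite /q /= ffunE /= in E3.
  rewrite E1 E2 -hn; split => H.
    by apply/E3; apply/asboolP.
  by apply/asboolP; apply/E3.
have Hat : forall a, List.In a (atoms eps) -> forall i j, sem ev a (e i) (e j) <-> sem ev' a (e' i) (e' j).
  move=> a Ha; have va := leq_trans (atoms_vo Ha) Hvo.
  case: (Hok a Ha) => [Aa|[a0 [Aa0 Ea]]]; first exact: Hat0.
  subst a.
  move=> i j /=; have := Hat0 a0 Aa0 va i j; clear; tauto.
apply: (ep_transport Heq H2 H3 H1o H2o H3o Hat (u := x) (v := y)).
- by apply: semR_mono hE.
- by left; exists (i0 k); split.
- by left; exists (i1 k); split.
- by rewrite -e0 -e1 -[x]/(e (i0 k)) -[y]/(e (i1 k)); apply: Heq.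
Qed.


Lemma dd_transport (V T T' : Type) (ev : V -> T -> T -> Prop) (ev' : V -> T' -> T' -> Prop)
  (G0 : T -> T' -> Prop)
  (HG : forall u v u' v', G0 u u' -> G0 v v' -> (u = v <-> u' = v') /\ forall a, ev a u v <-> ev' a u' v')
  (t : term V) : dd_free t -> forall u v u' v', G0 u u' -> G0 v v' -> (sem ev t u v <-> sem ev' t u' v').
Proof.
elim: t => //=.
- by move=> a _ u v u' v' Gu Gv; apply: (HG _ _ _ _ Gu Gv).2.
- move=> s IHs r IHr /andP [ds dr] u v u' v' Gu Gv.
  by rewrite (IHs ds _ _ _ _ Gu Gv) (IHr dr _ _ _ _ Gu Gv).
- move=> s IHs r IHr /andP [ds dr] u v u' v' Gu Gv.
  by rewrite (IHs ds _ _ _ _ Gu Gv) (IHr dr _ _ _ _ Gu Gv).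
- by move=> s IHs ds u v u' v' Gu Gv; rewrite (IHs ds _ _ _ _ Gu Gv).
- by move=> _ u v u' v' Gu Gv; apply: (HG _ _ _ _ Gu Gv).1.
- move=> _ u v u' v' Gu Gv; have := (HG _ _ _ _ Gu Gv).1; clear; tauto.
- move=> p s IHs ds u v u' v' Gu Gv.
  case: (nat_of_ord (p (@Ordinal 2 0 isT)) == 0); case: (nat_of_ord (p (@Ordinal 2 1 isT)) == 0);
    exact: IHs.
Qed.

Definition hold0 (V : finType) (q : (bool * {ffun V * 'I_2 * 'I_2 -> bool})%type)
  (T : Type) (ev : V -> T -> T -> Prop) (x y : T) : Prop :=
  (x = y <-> q.1) /\
  forall (a : V) (i j : 'I_2), ev a (if nat_of_ord i == 0 then x else y) (if nat_of_ord j == 0 then x else y)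
     <-> q.2 (a, i, j).

Lemma base_fin (V : finType) (S : term V -> Prop) : (forall t, S t -> dd_free t) -> fin_classes S.
Proof.
move=> HS.
apply: (@fin_of_inv V S _ (@hold0 V)) => t St T ev x y T' ev' x' y' Hq.
pose q := (asbool (x = y), [ffun aij : V * 'I_2 * 'I_2 =>
   asbool (ev aij.1.1 (if nat_of_ord aij.1.2 == 0 then x else y) (if nat_of_ord aij.2 == 0 then x else y))]).
have hq : hold0 q ev x y.
  split; first by split => /asboolP.
  by move=> a i j; rewrite ffunE /=; split => /asboolP.
have [Exy Hat] := (Hq q).1 hq.
pose G0 u u' := (u = x /\ u' = x') \/ (u = y /\ u' = y').
have HG : forall u v u' v', G0 u u' -> G0 v v' -> (u = v <-> u' = v') /\ forall a, ev a u v <-> ev' a u' v'.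
  have E : x = y <-> x' = y'.
    split => H; [apply/Exy/asboolP => // | apply/asboolP; apply/Exy] => //.
  have at1 : forall a (i j : 'I_2), ev a (if nat_of_ord i == 0 then x else y) (if nat_of_ord j == 0 then x else y)
     <-> ev' a (if nat_of_ord i == 0 then x' else y') (if nat_of_ord j == 0 then x' else y').
    move=> a i j; rewrite Hat ffunE /=; split => [/asboolP //|H]; exact/asboolP.
  move=> u v u' v' [[-> ->]|[-> ->]] [[-> ->]|[-> ->]]; split => //.
  - move=> a; exact: (at1 a (@Ordinal 2 0 isT) (@Ordinal 2 0 isT)).
  - move=> a; exact: (at1 a (@Ordinal 2 0 isT) (@Ordinal 2 1 isT)).
  - exact: eq_sym_iff.
  - move=> a; exact: (at1 a (@Ordinal 2 1 isT) (@Ordinal 2 0 isT)).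
  - move=> a; exact: (at1 a (@Ordinal 2 1 isT) (@Ordinal 2 1 isT)).
move=> h; apply/(dd_transport HG (HS t St) (u := x) (v := y)) => //; [left|right]; by split.
Qed.

Lemma inappP (A : Type) (l m : seq A) (a : A) : List.In a (l ++ m) -> List.In a l \/ List.In a m.
Proof. exact: List.in_app_or. Qed.

Lemma sigma_ept (V : Type) n (t : term V) : Sigma n.+1 t ->
  exists eps : ept V, flat eps = t /\
    forall a, List.In a (atoms eps) -> Sigma n a \/ Pi n a.
Proof.
move=> H; remember n.+1 as m eqn:Em; move: n Em.
induction H => n0 Em.
- by [].
- case: Em => <-; exists (EAt t); split => // a [<-|[]]; by left.
- case: Em => <-; exists (EAt t); split => // a [<-|[]]; by right.
- have [e1 [f1 a1]] := IHSigma1 _ Em; have [e2 [f2 a2]] := IHSigma2 _ Em.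
  exists (ECup e1 e2); split; first by rewrite /= f1 f2.
  by move=> a Hx; case: (inappP Hx) => Hy; [exact: a1|exact: a2].
- have [e1 [f1 a1]] := IHSigma1 _ Em; have [e2 [f2 a2]] := IHSigma2 _ Em.
  exists (ECap e1 e2); split; first by rewrite /= f1 f2.
  by move=> a Hx; case: (inappP Hx) => Hy; [exact: a1|exact: a2].
- have [e1 [f1 a1]] := IHSigma1 _ Em; have [e2 [f2 a2]] := IHSigma2 _ Em.
  exists (EDot e1 e2); split; first by rewrite /= f1 f2.
  by move=> a Hx; case: (inappP Hx) => Hy; [exact: a1|exact: a2].
- have [e1 [f1 a1]] := IHSigma _ Em.
  by exists (EPerm p e1); split; first by rewrite /= f1.
- case: Em => <-; exists (EDot (EAt s) (EAt u)); split => // a Hx; case: (inappP Hx) => [[<-|[]]|[<-|[]]]; by right.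
Qed.

Lemma pi_ept (V : Type) n (t : term V) : Pi n.+1 t ->
  exists eps : ept V,
    [/\ forall T (ev : V -> T -> T -> Prop) x y, sem ev (flat eps) x y <-> ~ sem ev t x y,
        vo (flat eps) = vo t &
        forall a, List.In a (atoms eps) -> exists a0, (Sigma n a0 \/ Pi n a0) /\ a = tcompl a0].
Proof.
move=> H; remember n.+1 as m eqn:Em; move: n Em.
induction H => n0 Em.
- by [].
- case: Em => <-; exists (EAt (tcompl t)); split => // a [<-|[]]; exists t; split => //; by right.
- case: Em => <-; exists (EAt (tcompl t)); split => // a [<-|[]]; exists t; split => //; by left.
- have [e1 [s1 v1 a1]] := IHPi1 _ Em; have [e2 [s2 v2 a2]] := IHPi2 _ Em.
  exists (ECap e1 e2); split.
  + move=> T ev x y /=; rewrite s1 s2; tauto.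
  + by rewrite /= v1 v2.
  + by move=> a Hx; case: (inappP Hx) => Hy; [exact: a1|exact: a2].
- have [e1 [s1 v1 a1]] := IHPi1 _ Em; have [e2 [s2 v2 a2]] := IHPi2 _ Em.
  exists (ECup e1 e2); split.
  + move=> T ev x y /=; rewrite s1 s2; split; first tauto.
    move=> h; apply: NNPP => h'; apply: h; split; apply: NNPP => h''; apply: h'; by [left|right].
  + by rewrite /= v1 v2.
  + by move=> a Hx; case: (inappP Hx) => Hy; [exact: a1|exact: a2].
- have [e1 [s1 v1 a1]] := IHPi1 _ Em; have [e2 [s2 v2 a2]] := IHPi2 _ Em.
  exists (EDot e1 e2); split.
  + move=> T ev x y /=; split.
      by move=> [z [/s1 h1 /s2 h2]] h; case: (h z).
    move=> h; apply: NNPP => h'; apply: h => z.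
    case: (classic (sem ev s x z)) => hz; first by left.
    case: (classic (sem ev u z y)) => hz'; first by right.
    by case: h'; exists z; split; [apply/s1|apply/s2].
  + by rewrite /= v1 v2.
  + by move=> a Hx; case: (inappP Hx) => Hy; [exact: a1|exact: a2].
- have [e1 [s1 v1 a1]] := IHPi _ Em.
  exists (EPerm p e1); split => //.
  by move=> T ev x y /=; rewrite s1.
- case: Em => <-; exists (EDot (EAt (tcompl s)) (EAt (tcompl u))); split => //.
  + move=> T ev x y /=; split.
      by move=> [z [h1 h2]] h; case: (h z).
    move=> h; apply: NNPP => h'; apply: h => z.
    case: (classic (sem ev s x z)) => hz; first by left.
    case: (classic (sem ev u z y)) => hz'; first by right.
    by case: h'; exists z.
  + move=> a Hx; case: (inappP Hx) => [[<-|[]]|[<-|[]]]; [exists s|exists u]; split => //; by left.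
Qed.

Lemma fin_union (V : Type) (S1 S2 : term V -> Prop) :
  fin_classes S1 -> fin_classes S2 -> fin_classes (fun t => S1 t \/ S2 t).
Proof.
move=> [L1 [H1 K1]] [L2 [H2 K2]]; exists (L1 ++ L2); split.
- by move=> s Hx; case: (inappP Hx) => Hy; [left; exact: H1|right; exact: H2].
- move=> t [St|St].
  + by case: (K1 t St) => s Ls E; exists s => //; apply: List.in_or_app; left.
  + by case: (K2 t St) => s Ls E; exists s => //; apply: List.in_or_app; right.
Qed.

Lemma levels (V : finType) n k :
  fin_classes (fun t : term V => Sigma n t /\ vo t <= k) /\
  fin_classes (fun t : term V => Pi n t /\ vo t <= k).
Proof.
elim: n k => [|n IH] k.
  split; apply: base_fin => t [H _]; inversion H => //.
have [R [_ HR0]] := fin_union (IH k).1 (IH k).2.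
have HR : forall a, (Sigma n a \/ Pi n a) -> vo a <= k -> exists r, List.In r R /\ rel_equiv a r.
  move=> a [Sa|Pa] va; [case: (HR0 a (or_introl (conj Sa va)))|case: (HR0 a (or_intror (conj Pa va)))];
    by move=> r Rr Er; exists r.
split.
- apply: (@fin_of_inv V _ (QR R k) (fun q T ev x y => @holdR V R k q T ev x y)).
  move=> t [St vt] T ev x y T' ev' x' y' Hq.
  have [eps [Ef Hat]] := sigma_ept St.
  rewrite -Ef; apply: (ep_inv HR) => //; first by move=> a /Hat; left.
  by rewrite Ef.
- apply: (@fin_of_inv V _ (QR R k) (fun q T ev x y => @holdR V R k q T ev x y)).
  move=> t [Pt vt] T ev x y T' ev' x' y' Hq h.
  have [eps [Hs Hv Hat]] := pi_ept Pt.
  apply: NNPP => /(Hs T' ev' x' y') h'.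
  have Hq' : forall q : QR R k, @holdR V R k q T' ev' x' y' <-> @holdR V R k q T ev x y.
    by move=> q; split => /(Hq q).
  have := ep_inv HR (eps := eps) _ _ Hq' h'.
  move=> /(_ _ _)/(Hs T ev x y); apply => //.
  + by move=> a /Hat; right.
  + by rewrite Hv.
Qed.


Theorem theorem4p1 (V : finType) (HV : 0 < #|V|) (n k : nat) :
  exists L : seq (term V),
    (forall s, List.In s L -> Sigma n s /\ vo s <= k) /\
    (forall t, Sigma n t -> vo t <= k -> exists2 s, List.In s L & rel_equiv t s).
Proof.
have [L [H1 H2]] := (levels V n k).1.
exists L; split => // t St vt; exact: H2.
Qed.
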